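(* Let $\pi$ be a set of primes, $G$ a finite group, $H$ a $\pi$-Hall subgroup of $G$, and $A=A_1\times\dots\times A_s$ a normal subgroup of $G$ which is the (internal) direct product of subgroups $A_1,\dots,A_s$, each of which is normal in $G$. Assume $G=HAC_G(A)$. Then $k_\pi^G(A)=k_\pi^G(A_1)\cdots k_\pi^G(A_s)$.
   Context: All groups are finite. A subgroup $H$ of $G$ is a $\pi$-Hall subgroup if all prime divisors of $|H|$ lie in $\pi$ and no prime divisor of $|G:H|$ lies in $\pi$. For a subnormal subgroup $A$ of a group $G$ possessing $\pi$-Hall subgroups, a $G$-induced $\pi$-Hall subgroup of $A$ is a subgroup $K\cap A$ with $K$ a $\pi$-Hall subgroup of $G$; an $A$-class of $G$-induced $\pi$-Hall subgroups is a set $\{(K\cap A)^x\mid x\in A\}$ with $K$ a $\pi$-Hall subgroup of $G$; and $k_\pi^G(A)$ denotes the number of distinct $A$-classes of $G$-induced $\pi$-Hall subgroups of $A$. *)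

(* Defs.v *)
From HB Require Import structures.
From mathcomp Require Import all_boot all_order all_fingroup all_solvable.
Set Implicit Arguments. Unset Strict Implicit. Unset Printing Implicit Defensive.

Local Open Scope group_scope.

Definition k_pi (gT : finGroupType) (pi : nat_pred) (G A : {set gT}) : nat :=
  #|[set (gval K :&: A) :^: A | K : {group gT} & pi.-Hall(G) K]|.

(* Main.v *)
Require Import Defs.
From mathcomp Require Import all_boot all_order all_fingroup all_solvable.
Set Implicit Arguments. Unset Strict Implicit. Unset Printing Implicit Defensive.
Local Open Scope group_scope.

Section Dprod.
Variables (gT : finGroupType) (s : nat) (As : 'I_s -> {group gT}) (A : {group gT}).
Hypothesis defA : \big[dprod/1]_(i < s) As i = A.

Lemma As_cent i j : i != j -> As i \subset 'C(As j).
Proof.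
move=> nij.
have /bigcprodYP cH : \big[cprod/1]_(i < s) As i == (\prod_(i < s) As i)%G.
  by rewrite (bigdprodWcp defA) bigprodGE (bigdprodWY defA).
by apply: cH.
Qed.

Lemma As_sub i : As i \subset A.
Proof. by rewrite -(bigdprodWY defA) sub_gen // (bigcup_max i). Qed.

Lemma conj_prod (c : 'I_s -> gT) : (forall j, c j \in As j) ->
  forall i (X : {set gT}), X \subset As i -> X :^ (\prod_(j < s) c j) = X :^ c i.
Proof.
move=> cA i X sX.
have defc := bigdprodWcp defA.
have r_i : i \in index_enum 'I_s by rewrite mem_index_enum.
have pe := perm_to_rem r_i.
rewrite (perm_bigcprod defc _ pe); last by move=> j _; apply: cA.
rewrite big_cons conjsgM rem_filter ?index_enum_uniq // big_filter.
apply/normP; apply: (subsetP (cent_sub _)).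
have sXc : X :^ c i \subset As i by rewrite -(conjGid (cA i)) conjSg.
apply: (subsetP (centS sXc)); apply: group_prod => j /= nji.
exact: (subsetP (As_cent nji)).
Qed.

Lemma conj_comp i (X : {set gT}) a : X \subset As i -> a \in A ->
  exists2 x, x \in As i & X :^ a = X :^ x.
Proof.
move=> sX Aa; have [c [cA -> _]] := mem_bigdprod defA Aa.
have cA' : forall j, c j \in As j by move=> j; apply: cA.
by exists (c i); [apply: cA' | apply: conj_prod].
Qed.

Lemma gen_card (B : 'I_s -> {group gT}) : (forall i, B i \subset As i) ->
  #|<<\bigcup_(i < s) B i>>| = (\prod_(i < s) #|B i|)%N.
Proof.
move=> sB.
have /bigdprodYP dA : \big[dprod/1]_(i < s) As i == (\prod_(i < s) As i)%G.
  by rewrite defA bigprodGE (bigdprodWY defA).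
have /eqP dB : \big[dprod/1]_(i < s) B i == (\prod_(i < s) B i)%G.
  apply/bigdprodYP => i _.
  have s1 : (\prod_(j | true && (j != i)) B j)%G \subset (\prod_(j | true && (j != i)) As j)%G.
    rewrite !bigprodGE genS //; apply/bigcupsP => j /= nji.
    by rewrite (bigcup_max j) ?nji // (sB j).
  have s2 : 'C(As i) :\: (As i)^# \subset 'C(B i) :\: (B i)^#.
    apply/subsetP => x; rewrite !inE => /andP[nx cx]; rewrite (subsetP (centS (sB i))) //.
    rewrite andbT; apply: contra nx => /andP[-> xB]; exact: (subsetP (sB i)).
  exact: subset_trans s1 (subset_trans (dA i isT) s2).
by rewrite (bigdprod_card dB) bigprodGE.
Qed.

Lemma partn_prod pi (F : 'I_s -> nat) : (forall i, 0 < F i)%N ->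
  (\prod_(i < s) (F i)`_pi = (\prod_(i < s) F i)`_pi)%N.
Proof.
move=> F0; suff [] : (\prod_(i < s) (F i)`_pi = (\prod_(i < s) F i)`_pi
        /\ 0 < \prod_(i < s) F i)%N by [].
elim/big_rec2: _ => [|i m n _ [-> n0]]; first by rewrite partn1.
by rewrite partnM ?muln_gt0 ?F0.
Qed.

Lemma gen_Hall pi (B : 'I_s -> {group gT}) : (forall i, pi.-Hall(As i) (B i)) ->
  pi.-Hall(A) <<\bigcup_(i < s) B i>>.
Proof.
move=> hB; have sB i : B i \subset As i by apply: pHall_sub (hB i).
apply/pHallP; split.
  by rewrite gen_subG; apply/bigcupsP => i _; apply: subset_trans (sB i) (As_sub i).
rewrite gen_card //; under eq_bigr do rewrite (card_Hall (hB _)).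
by rewrite partn_prod ?(bigdprod_card defA) // => i; apply: cardG_gt0.
Qed.

Lemma Hall_eq pi (X Y M : {group gT}) : pi.-Hall(M) X -> pi.-Hall(M) Y ->
  X \subset Y -> X :=: Y.
Proof.
by move=> hX hY sXY; apply/eqP; rewrite eqEcard sXY (card_Hall hX) (card_Hall hY) leqnn.
Qed.

End Dprod.

Section Main.
Variables (gT : finGroupType) (pi : nat_pred) (G H A : {group gT})
    (s : nat) (As : 'I_s -> {group gT}).
Hypotheses (hallH : pi.-Hall(G) H) (nsAG : A <| G) (nsAsG : forall i, As i <| G)
  (defA : \big[dprod/1]_(i < s) As i = A) (defG : H * A * 'C_G(A) = G).

Lemma hallKA (K : {group gT}) : pi.-Hall(G) K ->
  K :&: A = <<\bigcup_(i < s) (K :&: As i)>>.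
Proof.
move=> hK.
have hB i : pi.-Hall(As i) (K :&: As i)%G by exact: Hall_setI_normal (nsAsG i) hK.
have := gen_Hall defA hB => hU.
have hKA : pi.-Hall(A) (K :&: A)%G by exact: Hall_setI_normal nsAG hK.
symmetry; apply: (Hall_eq hU hKA).
rewrite gen_subG; apply/bigcupsP => i _; exact: setIS (As_sub defA i).
Qed.

Lemma sAG : A \subset G. Proof. exact: normal_sub nsAG. Qed.

Lemma equiv_fwd (K K' : {group gT}) i :
  (K :&: A) :^: A = (K' :&: A) :^: A ->
  (K :&: As i) :^: As i = (K' :&: As i) :^: As i.
Proof.
move=> e.
have : (K' :&: A) \in (K :&: A) :^: A by rewrite e -orbitJs orbit_refl.
case/imsetP => a Aa eKA.
have -> : K' :&: As i = (K :&: A) :^ a :&: As i.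
  by rewrite -eKA -setIA (setIidPr (As_sub defA i)).
have nAi : As i :^ a = As i.
  apply/normP; apply: (subsetP (normal_norm (nsAsG i))); exact: (subsetP sAG).
have -> : (K :&: A) :^ a :&: As i = (K :&: As i) :^ a.
  by rewrite -{1}nAi -conjIg -setIA (setIidPr (As_sub defA i)).
have [x Ax ->] := conj_comp defA (subsetIr K (As i)) Aa.
apply/esym; rewrite -!orbitJs; apply/orbit_eqP; rewrite orbitJs; exact: imset_f.
Qed.

Lemma equiv_bwd (K K' : {group gT}) : pi.-Hall(G) K -> pi.-Hall(G) K' ->
  (forall i, (K :&: As i) :^: As i = (K' :&: As i) :^: As i) ->
  (K :&: A) :^: A = (K' :&: A) :^: A.
Proof.
move=> hK hK' e.
have ex i : exists x, (x \in As i) && (K' :&: As i == (K :&: As i) :^ x).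
  have : (K' :&: As i) \in (K :&: As i) :^: As i by rewrite e -orbitJs orbit_refl.
  by case/imsetP => x Ax ->; exists x; rewrite Ax eqxx.
have [c cP] := fin_all_exists ex.
have cA j : c j \in As j by case/andP: (cP j).
have Aa : \prod_(j < s) c j \in A.
  by rewrite -(bigdprodW defA); apply: mem_prodg => j _; apply: cA.
apply/esym; rewrite -!orbitJs; apply/orbit_eqP; rewrite orbitJs; apply/imsetP; exists (\prod_(j < s) c j) => //.
rewrite !hallKA // -genJ -bigcupJ; congr <<_>>; apply: eq_bigr => i _.
rewrite (conj_prod defA cA (subsetIr _ _)); by case/andP: (cP i) => _ /eqP.
Qed.

Let C := 'C_G(A).
Lemma nsCG : C <| G.
Proof.
have := subcent_normal G A; by rewrite /C (setIidPl (normal_norm nsAG)).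
Qed.

Lemma ACE : A <*> C = A * C.
Proof.
by apply: norm_joinEr; apply: subset_trans (normal_sub nsCG) (normal_norm nsAG).
Qed.

Lemma KAC (K : {group gT}) : pi.-Hall(G) K -> K * (A <*> C) = G.
Proof.
move=> hK; set M := (A <*> C)%G.
have nsMG : M <| G by apply: normalY nsAG nsCG.
have sMG := normal_sub nsMG.
have hKM : pi.-Hall(M) (K :&: M)%G by exact: Hall_setI_normal nsMG hK.
have hHM : pi.-Hall(M) (H :&: M)%G by exact: Hall_setI_normal nsMG hallH.
have defHM : H * M = G by rewrite /M /= ACE mulgA.
apply/eqP; rewrite eqEcard mul_subG ?(pHall_sub hK) //=.
have e1 := mul_cardG K M; have e2 := mul_cardG H M.
rewrite defHM (card_Hall hKM) (card_Hall hHM) (card_Hall hK) (card_Hall hallH) in e1 e2.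
rewrite e2 in e1.
have p0 : (0 < #|M|`_pi)%N by apply: part_gt0.
by move/eqP: e1; rewrite eqn_pmul2r // => /eqP ->.
Qed.

Lemma conjU_G (K : {group gT}) i g : pi.-Hall(G) K -> g \in G ->
  exists2 x, x \in As i & (K :&: As i) :^ g = (K :&: As i) :^ x.
Proof.
move=> hK Gg; rewrite -(KAC hK) ACE in Gg.
case/mulsgP: Gg => k ac Kk /mulsgP[a c Aa Cc ->] ->.
have Gk : k \in G := subsetP (pHall_sub hK) k Kk.
rewrite !conjsgM.
have -> : (K :&: As i) :^ k = K :&: As i.
  rewrite conjIg (conjGid Kk); congr (_ :&: _).
  by apply/normP; apply: (subsetP (normal_norm (nsAsG i))).
have sUa : (K :&: As i) :^ a \subset A.
  by rewrite -(conjGid Aa) conjSg subIset // (As_sub defA i) orbT.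
have -> : ((K :&: As i) :^ a) :^ c = (K :&: As i) :^ a.
  apply/normP; apply: (subsetP (cent_sub _)); apply: (subsetP (centS sUa)).
  by case/setIP: Cc.
have := @conj_comp _ _ _ _ defA i (K :&: As i) a (subsetIr _ _) Aa. by [].
Qed.

Section Surj.
Variable Kf : 'I_s -> {group gT}.
Hypothesis hKf : forall i, pi.-Hall(G) (Kf i).
Let U i := (Kf i :&: As i)%G.
Let Nall := [group of \bigcap_(i < s) 'N(U i)].

Lemma hU i : pi.-Hall(As i) (U i).
Proof. exact: Hall_setI_normal (nsAsG i) (hKf i). Qed.

Lemma GNA g : g \in G -> exists2 a, a \in A & g * a^-1 \in Nall.
Proof.
move=> Gg.
have ex i : exists x, (x \in As i) && ((U i) :^ g == (U i) :^ x).
  by have [x Ax e] := conjU_G i (hKf i) Gg; exists x; rewrite Ax e eqxx.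
have [c cP] := fin_all_exists ex.
have cA j : c j \in As j by case/andP: (cP j).
have Aa : \prod_(j < s) c j \in A.
  by rewrite -(bigdprodW defA); apply: mem_prodg => j _; apply: cA.
exists (\prod_(j < s) c j) => //.
apply/bigcapP => i _; apply/normP.
rewrite conjsgM; case/andP: (cP i) => _ /eqP ->.
rewrite -(conj_prod defA cA (subsetIr _ _)) -conjsgM mulgV; exact: conjsg1.
Qed.

Let HA := (H <*> A)%G.
Lemma HAE : HA :=: H * A.
Proof.
apply: norm_joinEl; apply: subset_trans (pHall_sub hallH) (normal_norm nsAG).
Qed.
Lemma sHAG : HA \subset G.
Proof. by rewrite join_subG (pHall_sub hallH) sAG. Qed.

Let UU := <<\bigcup_(i < s) U i>>%G.
Lemma hUU : pi.-Hall(A) UU.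
Proof. by have := gen_Hall defA hU. Qed.

Let P := (HA :&: Nall)%G.
Lemma sPG : P \subset G.
Proof. exact: subset_trans (subsetIl _ _) sHAG. Qed.

Lemma sUUA : UU \subset A.
Proof. exact: pHall_sub hUU. Qed.

Lemma sUP : UU \subset P.
Proof.
rewrite subsetI (subset_trans sUUA) ?joing_subr //=.
rewrite gen_subG; apply/bigcupsP => j _; apply/bigcapsP => i _.
have [->|nji] := eqVneq j i; first exact: normG.
apply: subset_trans (cent_sub _); apply: subset_trans (centS (subsetIr _ _)).
exact: subset_trans (subsetIr _ _) (As_cent defA nji).
Qed.

Lemma nUP : P \subset 'N(UU).
Proof. by apply: norms_gen; apply: norms_bigcup; apply: subsetIr. Qed.

Lemma PAE : P * A = HA.
Proof.
apply/eqP; rewrite eqEsubset mul_subG ?subsetIl ?joing_subr //=.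
apply/subsetP => y HAy.
have [a Aa Na] := GNA (subsetP sHAG y HAy).
have HAa : a \in HA by rewrite (subsetP (joing_subr _ _)).
rewrite -(mulgKV a y); apply: mem_mulg => //.
by rewrite inE Na groupM ?groupV.
Qed.

Lemma index_PA : #|P : P :&: A| = #|H : H :&: A|.
Proof.
have e1 := mul_cardG P A; have e2 := mul_cardG H A.
rewrite PAE in e1; rewrite -HAE in e2.
rewrite -(Lagrange (subsetIl P A)) -mulnA [RHS]mulnC in e1.
rewrite -(Lagrange (subsetIl H A)) -mulnA [RHS]mulnC in e2.
move/eqP: e1; rewrite eqn_pmul2l // => /eqP e1.
move/eqP: e2; rewrite eqn_pmul2l // => /eqP e2.
by apply/eqP; rewrite -(eqn_pmul2r (cardG_gt0 A)) e1 e2.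
Qed.

Lemma exists_Q : exists2 Q : {group gT}, pi.-Hall(G) Q & forall i, Q :&: As i = U i.
Proof.
set W := (P :&: A)%G.
have sWP : W \subset P := subsetIl _ _.
have sUW : UU \subset W by rewrite subsetI sUP sUUA.
have hUW : pi.-Hall(W) UU by apply: pHall_subl sUW (subsetIr _ _) hUU.
have nsWP : W <| P by apply: normalGI sPG nsAG.
have nUW : W \subset 'N(UU) := subset_trans sWP nUP.
have nsWbPb : W / UU <| P / UU by apply: quotient_normal.
have cWb : #|W / UU| = #|W : UU| by apply: card_quotient.
have iWb : #|P / UU : W / UU| = #|P : W|.
  apply: index_quotient_eq => //; last exact: nUP.
  by rewrite /W /= setIS // sUUA.
have piPW : pi.-nat #|P : W|.
  by rewrite /W index_PA; apply: pnat_dvd (dvdn_indexg _ _) (pHall_pgroup hallH).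
have pi'WU : pi^'.-nat #|W : UU| by case/and3P: hUW.
have hallWb : Hall (P / UU) (W / UU).
  rewrite /Hall (normal_sub nsWbPb) iWb cWb.
  by rewrite coprime_sym; apply: pnat_coprime piPW pi'WU.
have /splitsP[Qb /complP[tiQb defQb]] := SchurZassenhaus_split hallWb nsWbPb.
have cQb : (#|W : UU| * #|Qb|)%N = #|P / UU| by rewrite -cWb -TI_cardMg // defQb.
have sQbP : Qb \subset P / UU by rewrite -defQb mulG_subr.
have sQbN : Qb \subset coset UU @* 'N(UU) by apply: subset_trans sQbP (quotientS _ nUP).
pose Q := (coset UU @*^-1 Qb)%G.
have cQ : #|Q| = (#|UU| * #|Qb|)%N by rewrite card_morphpre // ker_coset.
have sQP : Q \subset P.
  by rewrite (subset_trans (morphpreS _ sQbP)) // quotientK ?nUP // mul_subG ?sUP.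
have sUQ : UU \subset Q by rewrite -{1}(ker_coset UU) ker_sub_pre.
have cQb2 : #|Qb| = #|P : W|.
  apply/eqP; rewrite -(eqn_pmul2l (indexg_gt0 W UU)) cQb card_quotient ?nUP //.
  by rewrite mulnC (Lagrange_index sWP sUW).
have hQ : pi.-Hall(G) Q.
  apply/pHallP; split; first exact: subset_trans sQP sPG.
  rewrite -(card_Hall hallH) cQ cQb2 (card_Hall hUU) /W index_PA.
  rewrite -(card_Hall (Hall_setI_normal nsAG hallH)).
  exact: Lagrange (subsetIl H A).
exists Q => // i.
symmetry; apply: (Hall_eq (hU i) (Hall_setI_normal (nsAsG i) hQ)).
rewrite subsetI subsetIr andbT; apply: subset_trans sUQ.
by rewrite sub_gen // (bigcup_max i).
Qed.
End Surj.
End Main.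

Lemma card_imset_equiv (T X Y : finType) (D : {pred T}) (f : T -> X) (g : T -> Y)
  (y0 : Y) : {in D &, forall x y, (f x == f y) = (g x == g y)} ->
  #|f @: D| = #|g @: D|.
Proof.
move=> eqv.
pose h u := if [pick x in D | f x == u] is Some x then g x else y0.
have hf : {in D, forall x, h (f x) = g x}.
  move=> x Dx; rewrite /h; case: pickP => [y /andP[Dy /eqP e] | none].
    by apply/eqP; rewrite -eqv // e.
  by have := none x; rewrite Dx eqxx.
have -> : g @: D = h @: (f @: D).
  by rewrite -imset_comp; apply: eq_in_imset => x Dx; rewrite /= hf.
symmetry; apply: card_in_imset => u v /imsetP[x Dx ->] /imsetP[y Dy ->].
by rewrite !hf // => /eqP; rewrite -eqv // => /eqP.
Qed.

Unset Implicit Arguments.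
Theorem lemma9 (gT : finGroupType) (pi : nat_pred) (G H A : {group gT})
    (s : nat) (As : 'I_s -> {group gT}) :
  pi.-Hall(G) H ->
  A <| G ->
  (forall i, As i <| G) ->
  \big[dprod/1]_(i < s) As i = A ->
  H * A * 'C_G(A) = G ->
  k_pi pi G A = (\prod_(i < s) k_pi pi G (As i))%N.
Proof.
move=> hallH nsAG nsAsG defA defG.
pose Psi (K : {group gT}) : {ffun 'I_s -> {set {set gT}}} :=
  [ffun i => (gval K :&: As i) :^: As i].
pose F i := mem [set (gval K :&: As i) :^: As i | K : {group gT} & pi.-Hall(G) K].
rewrite /k_pi (@card_imset_equiv _ _ _ _ _ Psi (Psi H)); last first.
  move=> K K' hK hK'; rewrite !inE in hK hK'; apply/eqP/eqP => [e | e].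
    by apply/ffunP => i; rewrite !ffunE; apply: (equiv_fwd nsAG nsAsG defA).
  apply: (@equiv_bwd _ pi _ _ _ _ nsAG nsAsG defA _ _ hK hK') => i.
  by move/ffunP: e => /(_ i); rewrite !ffunE.
have -> : #|Psi @: [set K : {group gT} | pi.-Hall(G) K]| = #|family F|.
  apply: eq_card => f; apply/imsetP/familyP => [[K hK ->] i | fF].
    by rewrite ffunE /F /=; apply: imset_f.
  have ex i : exists K : {group gT}, pi.-Hall(G) K && (f i == (gval K :&: As i) :^: As i).
    have /imsetP[K hK ->] := fF i; exists K; rewrite inE in hK; by rewrite hK eqxx.
  have [Kf KfP] := fin_all_exists ex.
  have hKf i : pi.-Hall(G) (Kf i) by case/andP: (KfP i).
  have [Q hQ eQ] := exists_Q hallH nsAG nsAsG defA defG hKf.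
  exists Q; first by rewrite inE.
  apply/ffunP => i; rewrite ffunE eQ.
  by case/andP: (KfP i) => _ /eqP.
by rewrite card_family foldrE big_map big_enum.
Qed.
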